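(* For every $q\in\mathbf H^1_{\mathbb H}$, $$\sup_{\gamma\in PSL(2,\mathfrak L)}\Re(\gamma(q))<\infty\qquad\text{and}\qquad \sup_{\gamma\in PSL(2,\mathfrak H)}\Re(\gamma(q))<\infty.$$
   Context: $\mathbb H$ is the real quaternions, $\mathbf H^1_{\mathbb H}=\{q:\Re q>0\}$. Quaternionic matrices act by $q\mapsto(aq+b)(cq+d)^{-1}$. $\Im\mathbb H(\mathbb Z)=\{b\mathbf i+c\mathbf j+d\mathbf k:b,c,d\in\mathbb Z\}$, $\tau_\omega(q)=q+\omega$, $T(q)=q^{-1}$. $PSL(2,\mathfrak L)$ is the group generated by $T$ and the $\tau_\omega$, $\omega\in\Im\mathbb H(\mathbb Z)$. For a Hurwitz unit $u$ (one of the 24 quaternions $\pm1,\pm\mathbf i,\pm\mathbf j,\pm\mathbf k,\frac12(\pm1\pm\mathbf i\pm\mathbf j\pm\mathbf k)$), $D_u$ is the map $q\mapsto uqu^{-1}$ (matrix $\mathrm{diag}(u,u)$); $PSL(2,\mathfrak H)$ is the group generated by $T$, the $\tau_\omega$ and all $D_u$. All these elements are represented by matrices with Hurwitz-integer entries satisfying the (BG) conditions $\bar A^tKA=K$, $K=\begin{pmatrix}0&1\\1&0\end{pmatrix}$. *)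

(* Defs.v *)
From Stdlib Require Import Reals.
Open Scope R_scope.

Record quat : Type := Quat { q0 : R; q1 : R; q2 : R; q3 : R }.

Definition qRe (q : quat) : R := q0 q.

Definition qadd (p q : quat) : quat :=
  Quat (q0 p + q0 q) (q1 p + q1 q) (q2 p + q2 q) (q3 p + q3 q).

(* Hamilton product: i^2 = j^2 = k^2 = ijk = -1 *)
Definition qmul (p q : quat) : quat :=
  Quat (q0 p * q0 q - q1 p * q1 q - q2 p * q2 q - q3 p * q3 q)
       (q0 p * q1 q + q1 p * q0 q + q2 p * q3 q - q3 p * q2 q)
       (q0 p * q2 q - q1 p * q3 q + q2 p * q0 q + q3 p * q1 q)
       (q0 p * q3 q + q1 p * q2 q - q2 p * q1 q + q3 p * q0 q).

Definition qnorm2 (q : quat) : R :=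
  q0 q * q0 q + q1 q * q1 q + q2 q * q2 q + q3 q * q3 q.

Definition qconj (q : quat) : quat := Quat (q0 q) (- q1 q) (- q2 q) (- q3 q).

(* multiplicative inverse (conj q / |q|^2); total, unspecified at 0 *)
Definition qinv (q : quat) : quat :=
  let n := qnorm2 q in Quat (q0 q / n) (- q1 q / n) (- q2 q / n) (- q3 q / n).

Definition qzero : quat := Quat 0 0 0 0.
Definition qone : quat := Quat 1 0 0 0.

Definition in_H1 (q : quat) : Prop := 0 < qRe q.

Definition in_ImHZ (w : quat) : Prop :=
  q0 w = 0 /\ exists b c d : Z, q1 w = IZR b /\ q2 w = IZR c /\ q3 w = IZR d.

Definition is_pm1_or_0 (x : R) : Prop := x = 1 \/ x = -1 \/ x = 0.
Definition is_pm_half (x : R) : Prop := x = 1/2 \/ x = -(1/2).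
Definition hurwitz_unit (u : quat) : Prop :=
  (u = Quat 1 0 0 0 \/ u = Quat (-1) 0 0 0 \/ u = Quat 0 1 0 0 \/ u = Quat 0 (-1) 0 0
   \/ u = Quat 0 0 1 0 \/ u = Quat 0 0 (-1) 0 \/ u = Quat 0 0 0 1 \/ u = Quat 0 0 0 (-1))
  \/ (is_pm_half (q0 u) /\ is_pm_half (q1 u) /\ is_pm_half (q2 u) /\ is_pm_half (q3 u)).

Record qmat : Type := QMat { ma : quat; mb : quat; mc : quat; md : quat }.

Definition mmul (A B : qmat) : qmat :=
  QMat (qadd (qmul (ma A) (ma B)) (qmul (mb A) (mc B)))
       (qadd (qmul (ma A) (mb B)) (qmul (mb A) (md B)))
       (qadd (qmul (mc A) (ma B)) (qmul (md A) (mc B)))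
       (qadd (qmul (mc A) (mb B)) (qmul (md A) (md B))).

Definition mid : qmat := QMat qone qzero qzero qone.

Definition mob (A : qmat) (q : quat) : quat :=
  qmul (qadd (qmul (ma A) q) (mb A)) (qinv (qadd (qmul (mc A) q) (md A))).

Definition matT : qmat := QMat qzero qone qone qzero.
Definition matTau (w : quat) : qmat := QMat qone w qzero qone.
Definition matD (u : quat) : qmat := QMat u qzero qzero u.

Inductive genL : qmat -> Prop :=
  | genL_T : genL matT
  | genL_tau : forall w, in_ImHZ w -> genL (matTau w).

Inductive genH : qmat -> Prop :=
  | genH_T : genH matT
  | genH_tau : forall w, in_ImHZ w -> genH (matTau w)
  | genH_D : forall u, hurwitz_unit u -> genH (matD u).

(* Subgroup generated by a generating set closed under inverses
   (T^{-1} = T, tau_w^{-1} = tau_{-w}, D_u^{-1} = D_{conj u}):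
   all finite products of generators. *)
Inductive generated (G : qmat -> Prop) : qmat -> Prop :=
  | gen_id : generated G mid
  | gen_mul : forall g M, G g -> generated G M -> generated G (mmul g M).

Definition PSL2_L (M : qmat) : Prop := generated genL M.
Definition PSL2_H (M : qmat) : Prop := generated genH M.

(* Main.v *)
Require Import Defs.
From Stdlib Require Import Reals Lra Lia Psatz ZArith.
Open Scope R_scope.


Definition hurw (h:quat) : Prop := exists n0 n1 n2 n3 : Z,
  q0 h = IZR n0 / 2 /\ q1 h = IZR n0/2 + IZR n1 /\ q2 h = IZR n0/2 + IZR n2 /\ q3 h = IZR n0/2 + IZR n3.

Lemma hurw_mul p h : hurw p -> hurw h -> hurw (qmul p h).
Proof.
  intros [m0 [m1 [m2 [m3 [E0 [E1 [E2 E3]]]]]]] [n0 [n1 [n2 [n3 [F0 [F1 [F2 F3]]]]]]].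
  destruct p as [p0 p1 p2 p3]; destruct h as [h0 h1 h2 h3]; simpl in *; subst.
  exists ((-(m0*n1) - m1*n0 - 2*m1*n1 - m0*n0 - m0*n2 - m2*n0 - 2*m2*n2 - m0*n3 - m3*n0 - 2*m3*n3)%Z).
  exists ((m0*n0 + m0*n1 + m1*n0 + m0*n3 + m2*n0 + m2*n3 - m3*n2 + m1*n1 + m2*n2 + m3*n3)%Z).
  exists ((m0*n2 - m1*n3 + m0*n0 + m2*n0 + m0*n1 + m3*n0 + m3*n1 + m1*n1 + m2*n2 + m3*n3)%Z).
  exists ((m0*n0 + m0*n3 + m0*n2 + m1*n0 + m1*n2 - m2*n1 + m3*n0 + m1*n1 + m2*n2 + m3*n3)%Z).
  repeat rewrite ?plus_IZR, ?mult_IZR, ?opp_IZR, ?minus_IZR; repeat split; unfold qmul; cbn [q0 q1 q2 q3]; field.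
Qed.

Lemma hurw_add p h : hurw p -> hurw h -> hurw (qadd p h).
Proof.
  intros [m0 [m1 [m2 [m3 [E0 [E1 [E2 E3]]]]]]] [n0 [n1 [n2 [n3 [F0 [F1 [F2 F3]]]]]]].
  destruct p as [p0 p1 p2 p3]; destruct h as [h0 h1 h2 h3]; simpl in *; subst.
  exists ((m0+n0)%Z); exists ((m1+n1)%Z); exists ((m2+n2)%Z); exists ((m3+n3)%Z).
  repeat rewrite ?plus_IZR; unfold qadd; cbn [q0 q1 q2 q3]; repeat split; field.
Qed.

Lemma Zsq4 n0 n1 n2 n3 : (n0*n0 + (n0+2*n1)*(n0+2*n1) + (n0+2*n2)*(n0+2*n2) + (n0+2*n3)*(n0+2*n3) = 0
  \/ 4 <= n0*n0 + (n0+2*n1)*(n0+2*n1) + (n0+2*n2)*(n0+2*n2) + (n0+2*n3)*(n0+2*n3))%Z.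
Proof.
  destruct (Z_lt_le_dec (n0*n0 + (n0+2*n1)*(n0+2*n1) + (n0+2*n2)*(n0+2*n2) + (n0+2*n3)*(n0+2*n3)) 4) as [H|H]; [left|right; lia].
  pose proof (Z.square_nonneg n0). pose proof (Z.square_nonneg (n0+2*n1)).
  pose proof (Z.square_nonneg (n0+2*n2)). pose proof (Z.square_nonneg (n0+2*n3)).
  assert (n0*n0 < 4)%Z by lia.
  assert (-1 <= n0 <= 1)%Z by nia.
  assert ((n0+2*n1)*(n0+2*n1) < 4)%Z by lia.
  assert ((n0+2*n2)*(n0+2*n2) < 4)%Z by lia.
  assert ((n0+2*n3)*(n0+2*n3) < 4)%Z by lia.
  assert (-1 <= n0+2*n1 <= 1)%Z by nia.
  assert (-1 <= n0+2*n2 <= 1)%Z by nia.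
  assert (-1 <= n0+2*n3 <= 1)%Z by nia.
  assert (n0 = 0)%Z by nia. subst. nia.
Qed.

Lemma hurw_norm h : hurw h -> qnorm2 h = 0 \/ 1 <= qnorm2 h.
Proof.
  intros [n0 [n1 [n2 [n3 [E0 [E1 [E2 E3]]]]]]].
  destruct h as [h0 h1 h2 h3]; unfold qnorm2; simpl in *; subst.
  match goal with |- ?X = 0 \/ _ => replace X with (IZR (n0*n0 + (n0+2*n1)*(n0+2*n1) + (n0+2*n2)*(n0+2*n2) + (n0+2*n3)*(n0+2*n3)) / 4) end.
  2:{ repeat rewrite ?mult_IZR, ?plus_IZR; field. }
  destruct (Zsq4 n0 n1 n2 n3) as [H|H].
  - left; rewrite H; simpl; lra.
  - right; apply IZR_le in H; lra.
Qed.

Definition dot (x y : quat) : R := q0 x*q0 y + q1 x*q1 y + q2 x*q2 y + q3 x*q3 y.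
Definition r3 (a b c d : quat) : quat := qadd (qmul a (qconj d)) (qmul b (qconj c)).
Definition RInv (q : quat) (M : qmat) : Prop :=
  dot (ma M) (mb M) = 0 /\ dot (mc M) (md M) = 0 /\  q0 (r3 (ma M) (mb M) (mc M) (md M)) = 1 /\ q1 (r3 (ma M) (mb M) (mc M) (md M)) = 0 /\  q2 (r3 (ma M) (mb M) (mc M) (md M)) = 0 /\ q3 (r3 (ma M) (mb M) (mc M) (md M)) = 0 /\  dot (qadd (qmul (ma M) q) (mb M)) (qadd (qmul (mc M) q) (md M)) = q0 q.

Ltac qcrunch := repeat match goal with x : quat |- _ => destruct x end;
  unfold dot, r3, qadd, qmul, qconj, qone, qzero, qnorm2; cbn [q0 q1 q2 q3]; ring.

Lemma qeq (x y : quat) : q0 x = q0 y -> q1 x = q1 y -> q2 x = q2 y -> q3 x = q3 y -> x = y.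
Proof. destruct x, y; simpl; intros; subst; reflexivity. Qed.

Ltac qeqcrunch := apply qeq; repeat match goal with x : quat |- _ => destruct x end;
  unfold qadd, qmul, qone, qzero; cbn [q0 q1 q2 q3]; ring.

Lemma mul0l x : qmul qzero x = qzero. Proof. qeqcrunch. Qed.
Lemma mul1l x : qmul qone x = x. Proof. qeqcrunch. Qed.
Lemma add0l x : qadd qzero x = x. Proof. qeqcrunch. Qed.
Lemma add0r x : qadd x qzero = x. Proof. qeqcrunch. Qed.
Lemma mul_assoc x y z : qmul x (qmul y z) = qmul (qmul x y) z. Proof. qeqcrunch. Qed.
Lemma mul_addl x y z : qmul (qadd x y) z = qadd (qmul x z) (qmul y z). Proof. qeqcrunch. Qed.
Lemma mul_addr x y z : qmul x (qadd y z) = qadd (qmul x y) (qmul x z). Proof. qeqcrunch. Qed.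
Lemma add4 x y z t : qadd (qadd x y) (qadd z t) = qadd (qadd x z) (qadd y t). Proof. qeqcrunch. Qed.

Lemma tI1 a b c d w : dot (qadd a (qmul w c)) (qadd b (qmul w d)) =
  dot a b + qnorm2 w * dot c d + dot w (r3 a b c d).
Proof. qcrunch. Qed.
Lemma tI30 a b c d w : q0 (r3 (qadd a (qmul w c)) (qadd b (qmul w d)) c d) = q0 (r3 a b c d) + 2 * dot c d * q0 w.
Proof. qcrunch. Qed.
Lemma tI31 a b c d w : q1 (r3 (qadd a (qmul w c)) (qadd b (qmul w d)) c d) = q1 (r3 a b c d) + 2 * dot c d * q1 w.
Proof. qcrunch. Qed.
Lemma tI32 a b c d w : q2 (r3 (qadd a (qmul w c)) (qadd b (qmul w d)) c d) = q2 (r3 a b c d) + 2 * dot c d * q2 w.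
Proof. qcrunch. Qed.
Lemma tI33 a b c d w : q3 (r3 (qadd a (qmul w c)) (qadd b (qmul w d)) c d) = q3 (r3 a b c d) + 2 * dot c d * q3 w.
Proof. qcrunch. Qed.
Lemma tI4 x y w : dot (qadd x (qmul w y)) y = dot x y + q0 w * qnorm2 y.
Proof. qcrunch. Qed.

Lemma TI30 a b c d : q0 (r3 c d a b) = q0 (r3 a b c d). Proof. qcrunch. Qed.
Lemma TI31 a b c d : q1 (r3 c d a b) = - q1 (r3 a b c d). Proof. qcrunch. Qed.
Lemma TI32 a b c d : q2 (r3 c d a b) = - q2 (r3 a b c d). Proof. qcrunch. Qed.
Lemma TI33 a b c d : q3 (r3 c d a b) = - q3 (r3 a b c d). Proof. qcrunch. Qed.
Lemma dot_comm x y : dot x y = dot y x. Proof. qcrunch. Qed.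

Lemma dot_mulu u x y : dot (qmul u x) (qmul u y) = qnorm2 u * dot x y. Proof. qcrunch. Qed.
Lemma DI3 a b c d u : r3 (qmul u a) (qmul u b) (qmul u c) (qmul u d) = qmul (qmul u (r3 a b c d)) (qconj u).
Proof. destruct a as [a0 a1 a2 a3], b as [b0 b1 b2 b3], c as [c0 c1 c2 c3], d as [d0 d1 d2 d3], u as [u0 u1 u2 u3].
  apply qeq; unfold r3, qconj, qadd, qmul; cbn [q0 q1 q2 q3]; ring. Qed.
Lemma U3 u r : q0 r = 1 -> q1 r = 0 -> q2 r = 0 -> q3 r = 0 ->
  qmul (qmul u r) (qconj u) = Quat (qnorm2 u) 0 0 0.
Proof. destruct r as [r0 r1 r2 r3x]; simpl; intros; subst. apply qeq; destruct u as [u0 u1 u2 u3]; unfold qmul, qconj, qnorm2; cbn [q0 q1 q2 q3]; ring. Qed.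

Lemma hurw_int (x0 x1 x2 x3 : Z) : hurw (Quat (IZR x0) (IZR x1) (IZR x2) (IZR x3)).
Proof.
  exists (2*x0)%Z; exists (x1-x0)%Z; exists (x2-x0)%Z; exists (x3-x0)%Z; cbn [q0 q1 q2 q3].
  rewrite !minus_IZR, !mult_IZR; repeat split; field.
Qed.

Lemma hurw_zero : hurw qzero. Proof. exact (hurw_int 0 0 0 0). Qed.
Lemma hurw_one : hurw qone. Proof. exact (hurw_int 1 0 0 0). Qed.

Lemma ImHZ_facts w : in_ImHZ w -> q0 w = 0 /\ hurw w.
Proof.
  intros [H0 [b [c [d [H1 [H2 H3]]]]]]. split; [exact H0|].
  destruct w as [w0 w1 w2 w3]; cbn [q0 q1 q2 q3] in *; subst. exact (hurw_int 0 b c d).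
Qed.

Lemma half_diff x y : is_pm_half x -> is_pm_half y -> exists k : Z, y = x + IZR k.
Proof.
  intros [->| ->] [->| ->].
  - exists 0%Z; simpl; lra.
  - exists (-1)%Z; simpl; lra.
  - exists 1%Z; simpl; lra.
  - exists 0%Z; simpl; lra.
Qed.

Lemma unit_facts u : hurwitz_unit u -> qnorm2 u = 1 /\ hurw u.
Proof.
  intros [H|[H0 [H1 [H2 H3]]]].
  - repeat destruct H as [H|H]; subst; split;
      try (unfold qnorm2; cbn [q0 q1 q2 q3]; ring).
    all: first [exact (hurw_int 1 0 0 0) | exact (hurw_int (-1) 0 0 0) | exact (hurw_int 0 1 0 0)
      | exact (hurw_int 0 (-1) 0 0) | exact (hurw_int 0 0 1 0) | exact (hurw_int 0 0 (-1) 0)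
      | exact (hurw_int 0 0 0 1) | exact (hurw_int 0 0 0 (-1))].
  - split.
    + unfold qnorm2; destruct H0 as [->| ->]; destruct H1 as [->| ->];
      destruct H2 as [->| ->]; destruct H3 as [->| ->]; field.
    + destruct (half_diff _ _ H0 H1) as [k1 E1]; destruct (half_diff _ _ H0 H2) as [k2 E2];
      destruct (half_diff _ _ H0 H3) as [k3 E3].
      destruct H0 as [E0|E0].
      * exists 1%Z, k1, k2, k3; simpl; repeat split; lra.
      * exists (-1)%Z, k1, k2, k3; simpl; repeat split; lra.
Qed.

Definition HInv (M : qmat) : Prop := hurw (ma M) /\ hurw (mb M) /\ hurw (mc M) /\ hurw (md M).

Lemma gen_hurw g : genH g -> HInv g.
Proof.
  intros [| w Hw | u Hu]; unfold HInv, matT, matTau, matD; cbn [ma mb mc md].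
  - repeat split; auto using hurw_zero, hurw_one.
  - destruct (ImHZ_facts w Hw). repeat split; auto using hurw_zero, hurw_one.
  - destruct (unit_facts u Hu). repeat split; auto using hurw_zero, hurw_one.
Qed.

Lemma HInv_step g M : genH g -> HInv M -> HInv (mmul g M).
Proof.
  intros Hg HM; destruct (gen_hurw g Hg) as (Ha&Hb&Hc&Hd); destruct HM as (Ka&Kb&Kc&Kd).
  unfold mmul, HInv; cbn [ma mb mc md]; repeat split; auto using hurw_add, hurw_mul.
Qed.

Lemma RInv_step q g M : genH g -> RInv q M -> RInv q (mmul g M).
Proof.
  destruct M as [a b c d].
  intros [| w Hw | u Hu]; unfold mmul, matT, matTau, matD; cbn [ma mb mc md];
    rewrite ?mul0l, ?mul1l, ?add0l, ?add0r; unfold RInv; cbn [ma mb mc md];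
    intros (H1&H2&H3&H4&H5&H6&H7).
  - rewrite TI30, TI31, TI32, TI33, H3, H4, H5, H6.
    repeat split; try assumption; try ring.
    rewrite dot_comm; exact H7.
  - destruct (ImHZ_facts w Hw) as [Hw0 _].
    repeat split.
    + rewrite tI1, H1, H2. unfold dot; rewrite H3, H4, H5, H6, Hw0; ring.
    + exact H2.
    + rewrite tI30, H2, H3; ring.
    + rewrite tI31, H2, H4; ring.
    + rewrite tI32, H2, H5; ring.
    + rewrite tI33, H2, H6; ring.
    + rewrite mul_addl, <- mul_assoc, add4, <- mul_addr, tI4, H7, Hw0; ring.
  - destruct (unit_facts u Hu) as [Hn _].
    rewrite DI3, (U3 _ _ H3 H4 H5 H6), <- !mul_assoc, <- !mul_addr, !dot_mulu, H1, H2, H7, Hn.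
    cbn [q0 q1 q2 q3]. repeat split; ring.
Qed.

Lemma RInv_mid q : RInv q mid.
Proof.
  destruct q as [s v1 v2 v3].
  unfold RInv, mid; cbn [ma mb mc md]; unfold dot, r3, qadd, qmul, qconj, qone, qzero; cbn [q0 q1 q2 q3].
  repeat split; ring.
Qed.

Lemma HInv_mid : HInv mid.
Proof. unfold HInv, mid; cbn [ma mb mc md]; repeat split; auto using hurw_zero, hurw_one. Qed.

Lemma gen_inv q M : generated genH M -> RInv q M /\ HInv M.
Proof.
  induction 1 as [| g M Hg HM [IH1 IH2]].
  - split; [apply RInv_mid | apply HInv_mid].
  - split; [apply RInv_step | apply HInv_step]; auto.
Qed.

Lemma genL_H M : generated genL M -> generated genH M.
Proof.
  induction 1 as [| g M Hg HM IH]; constructor; auto.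
  destruct Hg; constructor; auto.
Qed.

Lemma re_mul_inv x y : q0 (qmul x (qinv y)) = dot x y / qnorm2 y.
Proof. destruct x as [x0 x1 x2 x3], y as [y0 y1 y2 y3]; unfold qmul, qinv, dot, qnorm2; cbn [q0 q1 q2 q3]; unfold Rdiv; ring. Qed.

Lemma norm_split c d q : qnorm2 (qadd (qmul c q) d) =
  q0 q * q0 q * qnorm2 c + qnorm2 (qadd (qmul c (Quat 0 (q1 q) (q2 q) (q3 q))) d) + 2 * q0 q * dot c d.
Proof. qcrunch. Qed.

Lemma qnorm2_nonneg x : 0 <= qnorm2 x.
Proof. destruct x as [x0 x1 x2 x3]; unfold qnorm2; cbn [q0 q1 q2 q3]; nra. Qed.

Lemma qnorm2_zero x : qnorm2 x = 0 -> q0 x = 0 /\ q1 x = 0 /\ q2 x = 0 /\ q3 x = 0.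
Proof. destruct x as [x0 x1 x2 x3]; unfold qnorm2; cbn [q0 q1 q2 q3]; intros; repeat split; nra. Qed.

Lemma bound q M : RInv q M -> HInv M -> 0 < q0 q -> q0 (mob M q) <= q0 q + / q0 q.
Proof.
  destruct M as [a b c d]; unfold RInv, HInv, mob; cbn [ma mb mc md].
  intros (H1&H2&H3&H4&H5&H6&H7) (Ka&Kb&Kc&Kd) Hs.
  rewrite re_mul_inv, H7.
  set (s := q0 q) in *.
  set (N := qnorm2 (qadd (qmul c q) d)).
  assert (HN0 : 0 <= N) by apply qnorm2_nonneg.
  assert (HNp : 0 < N).
  { destruct (Rle_lt_or_eq_dec _ _ HN0) as [?|E]; auto.
    symmetry in E; apply qnorm2_zero in E; destruct E as (E0&E1&E2&E3).
    exfalso; unfold dot in H7; rewrite E0, E1, E2, E3 in H7; lra. }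
  assert (Hinv : 0 < / s) by (apply Rinv_0_lt_compat; lra).
  assert (Ht : s / N * N = s) by (field; lra).
  assert (Ht0 : 0 <= s / N) by (unfold Rdiv; apply Rmult_le_pos; [lra|left; apply Rinv_0_lt_compat; lra]).
  assert (Hss : s * / s = 1) by (field; lra).
  destruct (hurw_norm c Kc) as [Hc|Hc].
  - assert (HN1 : 1 <= N).
    { apply qnorm2_zero in Hc; destruct Hc as (E0&E1&E2&E3).
      assert (E : N = qnorm2 d).
      { unfold N; destruct c as [c0 c1 c2 c3], d as [d0 d1 d2 d3], q as [s0 s1 s2 s3]; cbn [q0 q1 q2 q3] in *; subst;
          unfold qnorm2, qadd, qmul; cbn [q0 q1 q2 q3]; ring. }
      destruct (hurw_norm d Kd) as [Hd|Hd]; lra. }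
    nra.
  - assert (HN1 : s * s <= N).
    { unfold N; rewrite norm_split, H2. fold s.
      pose proof (qnorm2_nonneg (qadd (qmul c (Quat 0 (q1 q) (q2 q) (q3 q))) d)). nra. }
    nra.
Qed.

Theorem corollary6p2 :
  forall q : quat, in_H1 q ->
    (exists C : R, forall g : qmat, PSL2_L g -> qRe (mob g q) <= C) /\
    (exists C : R, forall g : qmat, PSL2_H g -> qRe (mob g q) <= C).
Proof.
  intros q Hq; unfold in_H1, qRe in *.
  split; exists (q0 q + / q0 q); intros g Hg.
  - apply genL_H in Hg. destruct (gen_inv q g Hg). apply bound; auto.
  - destruct (gen_inv q g Hg). apply bound; auto.
Qed.
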